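(* Let $(\mathcal{X},\rho,\nu)$ be a metric measure space where $\rho$ is a doubling metric and $\nu$ is a finite Borel measure. Then the set $\mathcal{F}_0$ of measurable functions with $\nu$-negligible boundary is dense in $L^1(\mathcal{X},\nu)$: for every $\eta\in L^1(\mathcal{X},\nu)$ and every $\delta>0$ there is $\eta'\in L^1(\mathcal{X},\nu)$ with $\nu(\partial_{\eta'}\mathcal{X})=0$ and $\|\eta-\eta'\|_{L^1(\mathcal{X},\nu)}<\delta$.
   Context: A metric is doubling (with doubling dimension $d$) if every open ball $B(x,r)$ can be covered by $2^d$ balls of radius $r/2$. For a measurable $\eta$, $\mathrm{margin}_\eta(x)=\inf\{\rho(x,x'):\eta(x')\ne\eta(x)\}$ (infimum of empty set $=+\infty$) and $\partial_\eta\mathcal{X}=\{x:\mathrm{margin}_\eta(x)=0\}$. $\mathcal{F}_0=\{\eta \text{ measurable}:\nu(\partial_\eta\mathcal{X})=0\}$. *)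

(* Defs.v *)
From HB Require Import structures.
From mathcomp Require Import all_boot all_order all_algebra.
From mathcomp Require Import all_classical all_reals all_analysis.
Set Implicit Arguments. Unset Strict Implicit. Unset Printing Implicit Defensive.
Import Order.TTheory GRing.Theory Num.Theory.
Local Open Scope classical_set_scope.
Local Open Scope ring_scope.

Definition is_metric {R : realType} {T : Type} (rho : T -> T -> R) : Prop :=
  [/\ (forall x y, 0 <= rho x y),
      (forall x y, rho x y = 0 <-> x = y),
      (forall x y, rho x y = rho y x) &
      (forall x y z, rho x z <= rho x y + rho y z)].

Definition rball {R : realType} {T : Type} (rho : T -> T -> R) (x : T) (r : R)
  : set T := [set y | rho x y < r].

Definition rho_open {R : realType} {T : Type} (rho : T -> T -> R) : set (set T) :=
  [set A | forall x, A x -> exists2 r : R, 0 < r & rball rho x r `<=` A].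

Definition doubling {R : realType} {T : Type} (rho : T -> T -> R) : Prop :=
  exists dd : nat, forall (x : T) (r : R), 0 < r ->
    exists c : 'I_(2 ^ dd) -> T,
      rball rho x r `<=` \bigcup_(i in [set: 'I_(2 ^ dd)]) rball rho (c i) (r / 2).

(* margin_eta(x) = inf { rho(x,x') : eta x' <> eta x }, inf of empty = +oo *)
Definition margin {R : realType} {T : Type} (rho : T -> T -> R) (eta : T -> R)
  (x : T) : \bar R :=
  ereal_inf [set (rho x x')%:E | x' in [set x' | eta x' <> eta x]].

Definition boundary {R : realType} {T : Type} (rho : T -> T -> R) (eta : T -> R)
  : set T := [set x | margin rho eta x = 0%E].

(* Main.v *)
Require Import Defs.
From HB Require Import structures.
From mathcomp Require Import all_boot all_order all_algebra.
From mathcomp Require Import all_classical all_reals all_analysis.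
From mathcomp Require Import finmap ring lra measurable_realfun.
Import Order.TTheory GRing.Theory Num.Theory.
Import numFieldNormedType.Exports.
Import HBSimple.
Local Open Scope classical_set_scope.
Local Open Scope ring_scope.
Section S.
Context (R : realType) (d : measure_display) (T : measurableType d)
  (nu : {measure set T -> \bar R}).
Hypothesis hfinite : (nu setT < +oo)%E.

Lemma null_level (L : R -> set T) :
  (forall t, measurable (L t)) ->
  (forall s t, s != t -> L s `&` L t = set0) ->
  forall a b : R, a < b -> exists t, a < t < b /\ nu (L t) = 0%E.
Proof.
move=> mL disj a b ab.
apply: contrapT => H.
have pos t : a < t < b -> (0 < nu (L t))%E.
  move=> abt; rewrite lt0e measure_ge0 andbT; apply/negP => /eqP h.
  by apply: H; exists t.
have fin t : (nu (L t) < +oo)%E.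
  apply: le_lt_trans hfinite; apply: le_measure => //; exact/mem_set.
pose S n := [set t | a < t < b /\ (((n.+1%:R)^-1)%:E < nu (L t))%E].
have [n Sinf] : exists n, infinite_set (S n).
  apply: contrapT => /forallNP Hn.
  have cS : countable (\bigcup_n S n).
    apply: bigcup_countable => // n _.
    by apply: finite_set_countable; apply: contrapT; apply: Hn.
  have sub : [set` `]a, b[] `<=` \bigcup_n S n.
    move=> s /=; rewrite in_itv /= => abt.
    have /pos p := abt.
    have := fin s; have := p.
    case E: (nu (L s)) => [x| |] //; rewrite lte_fin => x0 _.
    have [k hk] := ltr_add_invr x0; rewrite add0r in hk.
    by exists k => //; split => //; rewrite E lte_fin.
  have := countable_lebesgue_measure0 (sub_countable (subset_card_le sub) cS).
  rewrite lebesgue_measure_itv /=.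
  rewrite lte_fin ab -EFinD => /eqP; rewrite eqe subr_eq0 => /eqP ba.
  by move: ab; rewrite ba ltxx.
pose M := fine (nu setT).
pose K := (Num.truncn (M * n.+1%:R)).+1.
have [B BS cB] := infinite_set_fset K Sinf.
have tB : trivIset [set` B] L.
  move=> s t _ _ [x [Ls Lt]]; apply/eqP; apply/negPn/negP => st.
  by have := disj _ _ st; rewrite -subset0 => /(_ x); apply.

have := measure_fbigsetU nu (fun t _ => mL t) tB.
have : (nu (\big[setU/set0]_(i <- B) L i) <= nu setT)%E.
  apply: le_measure; rewrite ?in_setE //; exact: bigsetU_measurable.
move=> h1 h2; rewrite h2 in h1.
have : (\sum_(i <- B) ((n.+1%:R)^-1)%:E <= \sum_(i <- B) nu (L i))%E.
  rewrite big_seq_cond [X in (_ <= X)%E]big_seq_cond.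
  apply: lee_sum => i /andP[iB _]; apply/ltW.
  by have [] := BS i iB.
move=> h3; have := le_trans h3 h1.
have Mfin : nu setT = M%:E by rewrite fineK // ge0_fin_numE.
rewrite sumEFin big_const_seq count_predT iter_addr_0 Mfin lee_fin.
apply/negP; rewrite -ltNge -[_ *+ #|` B|]mulr_natl ltr_pdivlMr //.

apply: lt_le_trans (truncnS_gt _) _.
by rewrite ler_nat.
Qed.

Lemma mono_approx {F : nat -> set T} : (forall n, measurable (F n)) ->
  nondecreasing_seq F -> forall e : R, 0 < e ->
  exists n, (nu (\bigcup_k F k `\` F n) < e%:E)%E.
Proof.
move=> mF ndF e e0.
have mU : measurable (\bigcup_k F k) by exact: bigcupT_measurable.
have cv := nondecreasing_cvg_mu mF mU ndF.
have finU : (nu (\bigcup_k F k) < +oo)%E.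
  by apply: le_lt_trans hfinite; apply: le_measure => //; exact/mem_set.
have fin n : nu (F n) \is a fin_num.
  rewrite ge0_fin_numE //; apply: le_lt_trans finU; apply: le_measure;
   [exact/mem_set|exact/mem_set|exact: bigcup_sup].
have lfin : nu (\bigcup_k F k) \is a fin_num by rewrite ge0_fin_numE.
have cv' : (fun n => nu (F n)) @ \oo --> (fine (nu (\bigcup_k F k)))%:E.
  by rewrite fineK //; exact: cv.
move/fine_cvgP: cv' => [_ {}cv].
have := cvgr_gt _ cv (fine (nu (\bigcup_k F k)) - e).
rewrite ltrBlDr ltrDl => /(_ _ e0) [N _ HN].
exists N; have := HN N (leqnn N) => /=.
rewrite measureD // setIidr; last by move=> x Fx; exists N.
move=> h; rewrite -[X in (X - _)%E](fineK lfin) -[X in (_ - X)%E](fineK (fin N)) -EFinB lte_fin.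
by rewrite ltrBlDr addrC -ltrBlDr.
Qed.

Context (rho : T -> T -> R).
Hypothesis hmetric : is_metric rho.
Hypothesis hborel : @measurable d T = <<s rho_open rho >>.

Definition sd (A B : set T) := (A `\` B) `|` (B `\` A).

Definition bgood (B : set T) := measurable B /\ exists N, nu.-negligible N /\
  forall x, ~ N x -> exists2 r, 0 < r &
    (rball rho x r `<=` B \/ rball rho x r `<=` ~` B).

Definition appr (A : set T) := measurable A /\ forall e : R, 0 < e ->
  exists B, bgood B /\ (nu (sd A B) < e%:E)%E.

Lemma rball_le x r s : r <= s -> rball rho x r `<=` rball rho x s.
Proof. by move=> rs y /= h; exact: lt_le_trans h rs. Qed.

Lemma measurable_sd {A B} : measurable A -> measurable B -> measurable (sd A B).
Proof. by move=> mA mB; apply: measurableU; apply: measurableD. Qed.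

Lemma sdC A B : sd (~` A) (~` B) = sd A B.
Proof.
rewrite /sd !setDE !setCK; apply/seteqP; split => x /=; tauto.
Qed.

Lemma sd_tri A B C : sd A C `<=` sd A B `|` sd B C.
Proof.
move=> x /=; rewrite /sd /=.
have [] := pselect (B x); tauto.
Qed.

Lemma sdU A A' B B' : sd (A `|` A') (B `|` B') `<=` sd A B `|` sd A' B'.
Proof. move=> x /=; rewrite /sd /=; tauto. Qed.

Lemma sd_meas_le {A B C D} : measurable C -> measurable D ->
  sd A B `<=` C `|` D -> measurable (sd A B) ->
  (nu (sd A B) <= nu C + nu D)%E.
Proof.
move=> mC mD sub mS.
apply: le_trans (measureU2 nu mC mD).
by apply: le_measure => //; [exact/mem_set|exact/mem_set/measurableU].
Qed.

Lemma bgood_set0 : bgood set0.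
Proof.
split => //; exists set0; split; first exact: negligible_set0.
by move=> x _; exists 1 => //; right => y _.
Qed.

Lemma bgoodC B : bgood B -> bgood (~` B).
Proof.
move=> [mB [N [nN HN]]]; split; first exact: measurableC.
exists N; split => // x /HN [r r0 h]; exists r => //.
by rewrite setCK; case: h; [right|left].
Qed.

Lemma bgoodU B B' : bgood B -> bgood B' -> bgood (B `|` B').
Proof.
move=> [mB [N [nN HN]]] [mB' [N' [nN' HN']]]; split; first exact: measurableU.
exists (N `|` N'); split; first exact: negligibleU.
move=> x /not_orP [/HN [r r0 h] /HN' [r' r0' h']].
exists (Num.min r r'); first by rewrite lt_min r0 r0'.
have s1 : rball rho x (Num.min r r') `<=` rball rho x r.
  by apply: rball_le; rewrite ge_min lexx.
have s2 : rball rho x (Num.min r r') `<=` rball rho x r'.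
  by apply: rball_le; rewrite ge_min lexx orbT.
case: h => h.
  by left => y /s1 /h; left.
case: h' => h'.
  by left => y /s2 /h'; right.
right => y yb [By|B'y]; [exact: (h y (s1 _ yb) By)|exact: (h' y (s2 _ yb) B'y)].
Qed.

Lemma appr_set0 : appr set0.
Proof.
split => // e e0; exists set0; split; first exact: bgood_set0.
by rewrite /sd !set0D setU0 measure0 lte_fin.
Qed.

Lemma apprC A : appr A -> appr (~` A).
Proof.
move=> [mA h]; split; first exact: measurableC.
move=> e /h [B [gB lt]]; exists (~` B); split; first exact: bgoodC.
by rewrite sdC.
Qed.

Lemma apprU A A' : appr A -> appr A' -> appr (A `|` A').
Proof.
move=> [mA h] [mA' h']; split; first exact: measurableU.
move=> e e0; have e2 : 0 < e / 2 by rewrite divr_gt0.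
have [B [gB lB]] := h _ e2; have [B' [gB' lB']] := h' _ e2.
exists (B `|` B'); split; first exact: bgoodU.
have m1 := measurable_sd mA gB.1; have m2 := measurable_sd mA' gB'.1.
have m3 : measurable (sd (A `|` A') (B `|` B')).
  by apply: measurable_sd; apply: measurableU => //; [exact: gB.1|exact: gB'.1].
apply: le_lt_trans (sd_meas_le m1 m2 (@sdU A A' B B') m3) _.
by rewrite (splitr e) EFinD lteD.
Qed.

Lemma appr_bigcup (F : nat -> set T) : (forall n, appr (F n)) ->
  appr (\bigcup_n F n).
Proof.
move=> hF.
have hC N : appr (\big[setU/set0]_(i < N) F i).
  elim: N => [|N IH]; first by rewrite big_ord0; exact: appr_set0.
  by rewrite big_ord_recr /=; exact: apprU.
have mF n : measurable (F n) := (hF n).1.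
have mU : measurable (\bigcup_n F n) by exact: bigcupT_measurable.
split => // e e0; have e2 : 0 < e / 2 by rewrite divr_gt0.
pose G k := \big[setU/set0]_(i < k.+1) F i.
have mG k : measurable (G k) := (hC k.+1).1.
have ndG : nondecreasing_seq G.
  by move=> m n mn; apply/subsetPset; apply: (@subset_bigsetU _ F m.+1 n.+1).
have [n hn] := mono_approx mG ndG _ e2.
rewrite /G bigcup_bigsetU_bigcup -/(G n) in hn.
have [B [gB lB]] := (hC n.+1).2 _ e2.
exists B; split => //.
have GsubU : G n `<=` \bigcup_k F k by exact: bigsetU_bigcup.
have sub : sd (\bigcup_k F k) B `<=` (\bigcup_k F k `\` G n) `|` sd (G n) B.
  move=> x /(sd_tri (\bigcup_k F k) (G n) B) [|]; last by right.
  by rewrite /sd => -[|[/GsubU]]; [left|].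
have m1 : measurable (\bigcup_k F k `\` G n) by exact: measurableD.
have m2 := measurable_sd (mG n) gB.1.
apply: le_lt_trans (sd_meas_le m1 m2 sub (measurable_sd mU gB.1)) _.
by rewrite (splitr e) EFinD lteD.
Qed.

Lemma mopen {A} : rho_open rho A -> measurable A.
Proof. by rewrite hborel; exact: sub_gen_smallest. Qed.


Lemma appr_open U : rho_open rho U -> appr U.
Proof.
move=> oU; have mUo := mopen oU.
case: hmetric => rho0 rho_eq rhoC rhoT.
split => // e e0.
have [->|/setTPn [z nUz]] := eqVneq U setT.
  exists setT; split.
    split => //; exists set0; split; first exact: negligible_set0.
    by move=> x _; exists 1 => //; left.
  by rewrite /sd setDv setU0 measure0 lte_fin.
pose g x := inf [set rho x y | y in ~` U].
have lbd x : has_lbound [set rho x y | y in ~` U].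
  by exists 0 => _ [y _ <-]; exact: rho0.
have ne x : [set rho x y | y in ~` U] !=set0 by exists (rho x z), z.
have g_le x y : ~ U y -> g x <= rho x y.
  by move=> nUy; apply: (ge_inf (lbd x)); exists y.
have g_lip x y : g x <= rho x y + g y.
  rewrite addrC -lerBlDr.
  apply: lb_le_inf (ne y) _ => _ [w nUw <-].
  rewrite lerBlDr; apply: le_trans (g_le x w nUw) _; rewrite addrC; exact: rhoT.
have gpos x : U x -> 0 < g x.
  move=> Ux; have [r r0 sub] := oU x Ux.
  apply: lt_le_trans r0 _; apply: lb_le_inf (ne x) _ => _ [w nUw <-].
  rewrite leNgt; apply/negP => lt; exact: nUw (sub w lt).
have Upos x : 0 < g x -> U x.
  move=> gx; apply: contrapT => nUx; have := g_le x x nUx.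
  by rewrite ((rho_eq x x).2 erefl) leNgt gx.
have ogt t : rho_open rho [set x | t < g x].
  move=> x /= tx; exists (g x - t); first by rewrite subr_gt0.
  move=> y; rewrite /rball /= => hy; have := g_lip x y; move=> h; lra.
have olt t : rho_open rho [set x | g x < t].
  move=> x /= tx; exists (t - g x); first by rewrite subr_gt0.
  move=> y; rewrite /rball /= => hy; have := g_lip y x; rewrite rhoC => h; lra.
pose L t := [set x | g x = t].
have mL t : measurable (L t).
  have -> : L t = ~` ([set x | g x < t] `|` [set x | t < g x]).
    apply/seteqP; split => x /=.
      by move=> -> [|]; rewrite ltxx.
    move=> h; apply/eqP; rewrite eq_le !leNgt; apply/andP; split;
      apply/negP => ?; apply: h; [right|left] => //.
  by apply: measurableC; apply: measurableU; apply: mopen.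
have disj s t : s != t -> L s `&` L t = set0.
  move=> st; apply/seteqP; split => x //= [gs gt]; move: st.
  by rewrite -gs -gt eqxx.
pose V n := [set x | n.+1%:R^-1 < g x].
have mV n : measurable (V n) := mopen (ogt _).
have ndV : nondecreasing_seq V.
  move=> m n mn; apply/subsetPset => x /=; apply: le_lt_trans.
  by rewrite lef_pV2 ?posrE // ler_nat ltnS.
have UV : \bigcup_n V n = U.
  apply/seteqP; split => [x [n _ /= h]|x Ux].
    by apply: Upos; apply: lt_trans h; rewrite invr_gt0.
  have [k hk] := ltr_add_invr (gpos x Ux); rewrite add0r in hk.
  by exists k.
have [n hn] := mono_approx mV ndV _ e0.
rewrite UV in hn.
have [t [/andP [t0 tn] Lt0]] := @null_level L mL disj 0 (n.+1%:R^-1) ltac:(by rewrite invr_gt0).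
exists [set x | t < g x]; split.
  split; first exact: mopen (ogt t).
  exists (L t); split; first by apply/negligibleP.
  move=> x /= gxt.
  case: (ltgtP (g x) t) => [lt|gt|eq] //.
  - exists (t - g x); first by rewrite subr_gt0.
    right => y; rewrite /rball /= => hy ty; have := g_lip y x; rewrite rhoC => h; lra.
  - exists (g x - t); first by rewrite subr_gt0.
    left => y; rewrite /rball /= => hy; have := g_lip x y => h; lra.
apply: le_lt_trans hn.
apply: le_measure; [apply/mem_set/measurable_sd => //; exact: mopen|
  apply/mem_set/measurableD => //|].
move=> x [[Ux ntx]|[tx nUx]].
  split => // Vx; apply: ntx; rewrite /V /= in Vx *; exact: lt_trans tn Vx.
by exfalso; apply: nUx; apply: Upos; rewrite /= in tx; lra.
Qed.

Lemma meas_appr {A} : measurable A -> appr A.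
Proof.
rewrite hborel => hA; apply: (smallest_sub _ _ hA); last first.
  by move=> U; exact: appr_open.
split.
- exact: appr_set0.
- by move=> B hB; rewrite setTD; exact: apprC.
- exact: appr_bigcup.
Qed.


Definition LC (f : T -> R) := exists N, nu.-negligible N /\
  forall x, ~ N x -> exists2 r, 0 < r & forall y, rho x y < r -> f y = f x.

Lemma LC_boundary f : LC f -> nu.-negligible (boundary rho f).
Proof.
move=> [N [nN HN]]; apply: negligibleS nN => x bx; apply: contrapT => nNx.
have [r r0 h] := HN x nNx.
move: bx; rewrite /boundary /margin /= => m0.
have : (r%:E <= ereal_inf [set (rho x x')%:E | x' in [set x' | f x' <> f x]])%E.
  apply: le_ereal_inf_tmp => _ [x' /= fx' <-].
  by rewrite lee_fin leNgt; apply/negP => lt; exact: fx' (h x' lt).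
by rewrite m0 lee_fin leNgt r0.
Qed.

Lemma LC_cst c : LC (fun _ => c).
Proof.
exists set0; split; first exact: negligible_set0.
by move=> x _; exists 1.
Qed.

Lemma LC_add f g : LC f -> LC g -> LC (fun x => f x + g x).
Proof.
move=> [N [nN HN]] [N' [nN' HN']]; exists (N `|` N'); split.
  exact: negligibleU.
move=> x /not_orP [/HN [r r0 h] /HN' [r' r0' h']].
exists (Num.min r r'); first by rewrite lt_min r0 r0'.
move=> y; rewrite lt_min => /andP [y1 y2].
by rewrite h // h'.
Qed.

Lemma LC_ind c B : bgood B -> LC (fun x => c * \1_B x).
Proof.
move=> [mB [N [nN HN]]]; exists N; split => // x /HN [r r0 h].
have xr : rball rho x r x.
  by case: hmetric => _ e _ _; rewrite /rball /= ((e x x).2 erefl).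
exists r => // y yr; case: h => h.
  by rewrite /indic (mem_set (h _ yr)) (mem_set (h _ xr)).
by rewrite /indic (memNset (h _ yr)) (memNset (h _ xr)).
Qed.


Lemma indic_sd_le (A B : set T) x :
  `|\1_A x - \1_B x| <= \1_(sd A B) x :> R.
Proof.
rewrite /indic /sd.
have [Ax|nAx] := pselect (A x); have [Bx|nBx] := pselect (B x).
- by rewrite (mem_set Ax) (mem_set Bx) subrr normr0.
- by rewrite (mem_set Ax) (memNset nBx) (@mem_set _ (_ `|` _) x) /=;
    [rewrite subr0 normr1|left].
- by rewrite (memNset nAx) (mem_set Bx) (@mem_set _ (_ `|` _) x) /=;
    [rewrite sub0r normrN normr1|right].
- rewrite (memNset nAx) (memNset nBx) subrr normr0.
  by case: (_ \in _).
Qed.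

Lemma approx_comb n (c : 'I_n -> R) (A : 'I_n -> set T) :
  (forall i, measurable (A i)) -> forall e : R, 0 < e ->
  exists f : T -> R, [/\ LC f, measurable_fun setT f,
    (exists M, forall x, `|f x| <= M) &
    (\int[nu]_x (`|\sum_(i < n) c i * \1_(A i) x - f x|)%:E < e%:E)%E].
Proof.
elim: n c A => [|n IH] c A mA e e0.
  exists (fun _ => 0); split.
  - exact: LC_cst.
  - exact: measurable_cst.
  - by exists 0 => x; rewrite normr0.
  - under eq_integral => x _ do rewrite big_ord0 subr0 normr0.
    by rewrite integral0 lte_fin.
have e2 : 0 < e / 2 by rewrite divr_gt0.
have [f [LCf mf [M hM] If]] := IH (fun i => c (widen_ord (leqnSn n) i))
  (fun i => A (widen_ord (leqnSn n) i)) (fun i => mA _) _ e2.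
set cn := c ord_max; set An := A ord_max.
have cn0 := normr_ge0 cn.
pose eps := e / 2 / (`|cn| + 1).
have eps0 : 0 < eps by rewrite /eps divr_gt0 //; lra.
have [_ hAn] := meas_appr (mA ord_max).
have [B [gB lB]] := hAn _ eps0.
have mB := gB.1.
pose S x := \sum_(i < n) c (widen_ord (leqnSn n) i) * \1_(A (widen_ord (leqnSn n) i)) x.
have mS : measurable_fun setT S.
  rewrite /S; apply: measurable_sum => i.
  apply: measurable_realfun.measurable_funM; [exact: measurable_cst|exact: measurable_realfun.measurable_indic].
have msd : measurable (sd An B) := measurable_sd (mA ord_max) mB.
exists (fun x => f x + cn * \1_B x); split.
- by apply: LC_add => //; exact: LC_ind.
- apply: measurable_realfun.measurable_funD => //; apply: measurable_realfun.measurable_funM;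
    [exact: measurable_cst|exact: measurable_realfun.measurable_indic].
- exists (M + `|cn|) => x.
  apply: le_trans (ler_normD _ _) _; apply: lerD => //.
  rewrite normrM ler_piMr //; rewrite /indic; case: (_ \in _) => /=;
    by rewrite ?normr1 ?normr0.
have pt x : `|\sum_(i < n.+1) c i * \1_(A i) x - (f x + cn * \1_B x)|
    <= `|S x - f x| + `|cn| * \1_(sd An B) x.
  rewrite big_ord_recr /= -/(S x).
  have -> : S x + c ord_max * \1_(A ord_max) x - (f x + cn * \1_B x)
      = (S x - f x) + cn * (\1_An x - \1_B x) by rewrite /cn /An; ring.
  apply: le_trans (ler_normD _ _) _; rewrite lerD2l normrM.
  by apply: ler_wpM2l => //; exact: indic_sd_le.
apply: le_lt_trans (ge0_le_integral (D := setT) nu measurableT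
  (f2 := fun x => (`|S x - f x|)%:E + (`|cn| * \1_(sd An B) x)%:E) _ _ _ _) _.
- by move=> x _; rewrite lee_fin.
- apply/measurable_realfun.measurable_EFinP; apply: measurableT_comp => //.
  apply: measurable_realfun.measurable_funB.
    apply: measurable_sum => i; apply: measurable_realfun.measurable_funM;
      [exact: measurable_cst|exact: measurable_realfun.measurable_indic].
  apply: measurable_realfun.measurable_funD => //; apply: measurable_realfun.measurable_funM;
    [exact: measurable_cst|exact: measurable_realfun.measurable_indic].
- apply: emeasurable_funD; apply/measurable_realfun.measurable_EFinP.
    by apply: measurableT_comp => //; exact: measurable_realfun.measurable_funB.
  by apply: measurable_realfun.measurable_funM; [exact: measurable_cst|exact: measurable_realfun.measurable_indic].
- by move=> x _; rewrite -EFinD lee_fin; exact: pt.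
have m1 : measurable_fun [set: T] (fun x : T => ((`|S x - f x|)%:E : \bar R)).
  by apply/measurable_realfun.measurable_EFinP; apply: measurableT_comp => //; exact: measurable_realfun.measurable_funB.
have m2 : measurable_fun [set: T] (fun x : T => ((`|cn| * \1_(sd An B) x)%:E : \bar R)).
  by apply/measurable_realfun.measurable_EFinP; apply: measurable_realfun.measurable_funM;
    [exact: measurable_cst|exact: measurable_realfun.measurable_indic].
have p1 : forall x, setT x -> (0 <= (`|S x - f x|)%:E)%E by move=> x _; rewrite lee_fin.
have p2 : forall x, setT x -> (0 <= (`|cn| * \1_(sd An B) x)%:E)%E.
  by move=> x _; rewrite lee_fin mulr_ge0.
rewrite (ge0_integralD nu measurableT p1 m1 p2 m2).
have -> : (\int[nu]_x (`|cn| * \1_(sd An B) x)%:E = `|cn|%:E * nu (sd An B))%E.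
  rewrite (eq_integral (fun x => `|cn|%:E * (\1_(sd An B) x)%:E)%E); last first.
    by move=> x _; rewrite EFinM.
  rewrite ge0_integralZl_EFin //.
  - by rewrite integral_indic // setIT.
  - by apply/measurable_EFinP; exact: measurable_indic.
rewrite (splitr e) EFinD; apply: lteD; first exact: If.
apply: le_lt_trans (lee_wpmul2l _ (ltW lB)) _; first by rewrite lee_fin.
rewrite -EFinM lte_fin /eps mulrA ltr_pdivrMr; last lra.
by rewrite mulrDr mulr1 mulrC ltrDl.
Qed.

End S.

Theorem proposition2 (R : realType) (d : measure_display) (T : measurableType d)
  (rho : T -> T -> R) (nu : {measure set T -> \bar R})
  (hmetric : is_metric rho)
  (hdoubling : doubling rho)
  (hborel : @measurable d T = <<s rho_open rho >>)
  (hfinite : (nu setT < +oo)%E)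
  (eta : T -> R) (heta : nu.-integrable setT (EFin \o eta))
  (delta : R) (hdelta : 0 < delta) :
  exists eta' : T -> R,
    [/\ nu.-integrable setT (EFin \o eta'),
        nu.-negligible (boundary rho eta') &
        (\int[nu]_x (`|eta x - eta' x|)%:E < delta%:E)%E].
Proof.
have d2 : 0 < delta / 2 by rewrite divr_gt0.
have /integrableP [meta _] := heta.
have meta' : measurable_fun setT eta by apply/measurable_EFinP.
have [g_ [intG _ cvg]] := approximation_sfun_integrable measurableT heta.
move: cvg => /fine_fcvg/cvg_ballP/(_ (delta / 2)) [] // N _ Nb.
set g := g_ N.
have fin : (\int[nu]_(z in setT) `|(EFin \o eta) z - (g z)%:E|)%E \is a fin_num.
  rewrite integrable_fin_num// integrable_abse//.
  by apply: integrableB => //; exact: intG.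
have Ig : (\int[nu]_z (`|eta z - g z|)%:E < (delta / 2)%:E)%E.
  have /= := Nb _ (leqnn N); rewrite /ball/= sub0r normrN -fine_abse// -lte_fin.
  rewrite fineK ?abse_fin_num// => /(le_lt_trans _); apply.
  apply: le_trans (lee_abs _).
  by rewrite le_eqVlt; apply/orP; left; apply/eqP; apply: eq_integral => x _; rewrite /= -abse_EFin EFinB.
have gE := fimfunEord g.
set s := fset_set (range g) in gE.
have mA : forall i : 'I_#|` s|, measurable (g @^-1` [set s`_i]).
  by move=> i; apply: measurable_funPTI; exact: measurable_set1.
have [f [LCf mf [M hM] If]] := @approx_comb R d T nu hfinite rho hmetric hborel
  _ (fun i => s`_i) _ mA _ d2.
exists f; split.
- apply: measurable_bounded_integrable => //.
  exists M; split; first exact: num_real.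
  by move=> y My x _; apply: le_trans (hM x) (ltW My).
- exact: LC_boundary LCf.
have mg : measurable_fun setT g by exact: measurable_funP.
have m1 : measurable_fun [set: T] (fun x : T => ((`|eta x - g x|)%:E : \bar R)).
  by apply/measurable_EFinP; apply: measurableT_comp => //; exact: measurable_funB.
have m2 : measurable_fun [set: T] (fun x : T => ((`|g x - f x|)%:E : \bar R)).
  by apply/measurable_EFinP; apply: measurableT_comp => //; exact: measurable_funB.
have p1 : forall x, setT x -> (0 <= (`|eta x - g x|)%:E)%E by move=> x _; rewrite lee_fin.
have p2 : forall x, setT x -> (0 <= (`|g x - f x|)%:E)%E by move=> x _; rewrite lee_fin.
apply: le_lt_trans (ge0_le_integral (D := setT) nu measurableT
  (f2 := fun x => (`|eta x - g x|)%:E + (`|g x - f x|)%:E) _ _ _ _) _.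
- by move=> x _; rewrite lee_fin.
- apply/measurable_EFinP; apply: measurableT_comp => //.
  exact: measurable_funB.
- exact: emeasurable_funD.
- move=> x _; rewrite -EFinD lee_fin.
  exact: ler_distD.
rewrite (ge0_integralD nu measurableT p1 m1 p2 m2).
rewrite (splitr delta) EFinD; apply: lteD; first exact: Ig.
apply: le_lt_trans If.
by rewrite le_eqVlt; apply/orP; left; apply/eqP; apply: eq_integral => x _; rewrite gE.
Qed.
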